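(* Let $\xi$ be a model and suppose the minimizer $\phi$ of $P_{0,\xi}$ on $\mathcal{C}$ is of the form $\phi(t)=m(1-t)+c$ with $m,c\in(0,\infty)$. Let $\eta(t)=\xi(1)-\int_t^1\int_0^s\phi(\tau)^{-2}d\tau\,ds$ be its formal conjugate. Then: (1) $m,c$ solve the system $$\xi(1)=\frac1m\Big(\frac1m\log\Big(\frac{c+m}{c}\Big)-\frac1{c+m}\Big),\qquad \frac1{\xi'(1)}=c(c+m);$$ (2) $\eta''(1)\ge\xi''(1)$; (3) $\eta''(0)\ge\xi''(0)$.
   Context: A model is $\xi(t)=\sum_{p\ge2}\beta_p^2t^p$, real $\beta_p$ not all zero, with $\xi(1+\epsilon)<\infty$ for some $\epsilon>0$. $\mathcal{C}$ is the set of $\phi\in C([0,1])$ with $\phi\ge0$, non-increasing and concave; $P_{0,\xi}(\phi)=\int_0^1(\xi''\phi+1/\phi)dx$. *)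

(* Defs.v *)
From Stdlib Require Import Reals.
From Coquelicot Require Import Coquelicot.
Open Scope R_scope.

Definition model_coef (beta : nat -> R) (n : nat) : R :=
  match n with 0%nat | 1%nat => 0 | _ => (beta n) ^ 2 end.

Definition xi (beta : nat -> R) (t : R) : R := PSeries (model_coef beta) t.

Definition is_model (beta : nat -> R) : Prop :=
  (exists p, (2 <= p)%nat /\ beta p <> 0) /\
  (exists eps, 0 < eps /\ ex_pseries (model_coef beta) (1 + eps)).

Definition in_C (phi : R -> R) : Prop :=
  (forall x, 0 <= x <= 1 ->
     filterlim phi (within (fun y => 0 <= y <= 1) (locally x)) (locally (phi x))) /\
  (forall x, 0 <= x <= 1 -> 0 <= phi x) /\
  (forall x y, 0 <= x <= 1 -> 0 <= y <= 1 -> x <= y -> phi y <= phi x) /\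
  (forall x y l, 0 <= x <= 1 -> 0 <= y <= 1 -> 0 <= l <= 1 ->
     l * phi x + (1 - l) * phi y <= phi (l * x + (1 - l) * y)).

Definition P0_integrand (f : R -> R) (phi : R -> R) (x : R) : R :=
  Derive_n f 2 x * phi x + / phi x.

(* P_{0,xi}(phi) is finite and equal to v: phi > 0 on [0,1) (otherwise phi
   vanishes on a nondegenerate interval and P = +oo) and the (possibly improper
   at 1) integral of the nonnegative integrand over [0,1] converges to v. *)
Definition P0_value (f : R -> R) (phi : R -> R) (v : R) : Prop :=
  (forall x, 0 <= x < 1 -> 0 < phi x) /\
  is_RInt_gen (P0_integrand f phi) (at_point 0) (at_left 1) v.

(* phi is the minimizer of P_{0,xi} on C (with P(psi) = +oo whenever it is
   not finite, such psi impose no constraint). *)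
Definition is_minimizer (f : R -> R) (phi : R -> R) : Prop :=
  in_C phi /\
  exists v, P0_value f phi v /\
    forall psi w, in_C psi -> P0_value f psi w -> v <= w.

Definition conj_eta (f : R -> R) (phi : R -> R) (t : R) : R :=
  f 1 - RInt (fun s => RInt (fun tau => / (phi tau) ^ 2) 0 s) t 1.

(* Main.v *)
Require Import Defs.
From Stdlib Require Import Reals Lra Psatz.
From Coquelicot Require Import Coquelicot.
Open Scope R_scope.

Lemma locally_abs (x r : R) : Rabs x < r -> locally x (fun y => Rabs y < r).
Proof.
  intros H. assert (Hp : 0 < r - Rabs x) by lra.
  exists (mkposreal _ Hp). intros y Hy.
  change (Rabs (y - x) < r - Rabs x) in Hy.
  pose proof (Rabs_triang_inv y x). lra.
Qed.

Lemma radius_model (beta : nat -> R) : is_model beta ->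
  exists r, 1 < r /\ forall x, Rabs x < r -> Rbar_lt (Rabs x) (CV_radius (model_coef beta)).
Proof.
  intros [_ [eps [Heps Hex]]].
  exists (1 + eps). split; [lra|].
  intros x Hx.
  destruct (Rbar_lt_le_dec (Rabs x) (CV_radius (model_coef beta))) as [H|H]. { exact H. }
  exfalso.
  set (y := (Rabs x + (1 + eps)) / 2).
  assert (Hy : Rbar_lt (CV_radius (model_coef beta)) (Rabs y)).
  { eapply Rbar_le_lt_trans; [exact H|]. simpl. unfold y.
    pose proof (Rabs_pos x). rewrite (Rabs_pos_eq ((Rabs x + (1+eps))/2)); lra. }
  apply (CV_disk_outside _ _ Hy).
  apply ex_series_lim_0.
  apply (@ex_series_le R_AbsRing R_CompleteNormedModule) with (b := fun n => scal (pow_n (1+eps) n) (model_coef beta n)); [|exact Hex].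
  intros n. unfold norm; simpl. unfold abs; simpl.
  change (scal (pow_n (1 + eps) n) (model_coef beta n)) with (pow_n (1 + eps) n * model_coef beta n).
  replace (pow_n (1 + eps) n) with ((1+eps)^n) by (rewrite <- pow_n_pow; reflexivity).
  assert (Ha : 0 <= model_coef beta n).
  { unfold model_coef. destruct n as [|[|n]]; try lra. apply pow2_ge_0. }
  pose proof (Rabs_pos x).
  assert (0 <= y <= 1 + eps) by (unfold y; lra).
  rewrite Rabs_pos_eq.
  - rewrite (Rmult_comm ((1+eps)^n)). apply Rmult_le_compat_l; [lra|]. apply pow_incr; lra.
  - apply Rmult_le_pos; [lra|]. apply pow_le; lra.
Qed.

Section S.
Lemma xi_derive (beta : nat -> R) (r : R)
  (Hr : forall x, Rabs x < r -> Rbar_lt (Rabs x) (CV_radius (model_coef beta))) x :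
  Rabs x < r -> is_derive (xi beta) x (Derive (xi beta) x).
Proof. intros Hx. apply Derive_correct. apply ex_derive_PSeries. auto. Qed.

Lemma xi_derive2 (beta : nat -> R) (r : R)
  (Hr : forall x, Rabs x < r -> Rbar_lt (Rabs x) (CV_radius (model_coef beta))) x :
  Rabs x < r -> is_derive (Derive (xi beta)) x (Derive_n (xi beta) 2 x).
Proof. intros Hx. apply Derive_correct. exact (ex_derive_n_PSeries 2 _ x (Hr x Hx)). Qed.

Lemma xi_cont2 (beta : nat -> R) (r : R)
  (Hr : forall x, Rabs x < r -> Rbar_lt (Rabs x) (CV_radius (model_coef beta))) x :
  Rabs x < r -> continuous (Derive_n (xi beta) 2) x.
Proof. intros Hx.
  apply continuous_ext_loc with (g := PSeries (PS_derive_n 2 (model_coef beta))).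
  - apply filter_imp with (2 := locally_abs x r Hx). intros y Hy.
    symmetry. apply Derive_n_PSeries. auto.
  - apply continuity_pt_filterlim. apply PSeries_continuity.
    rewrite CV_radius_derive_n. auto.
Qed.

Lemma xi_0 beta : xi beta 0 = 0.
Proof. unfold xi. rewrite PSeries_0. reflexivity. Qed.

Lemma xi'_0 beta (r : R) (Hr1 : 0 < r)
  (Hr : forall x, Rabs x < r -> Rbar_lt (Rabs x) (CV_radius (model_coef beta))) :
  Derive (xi beta) 0 = 0.
Proof. unfold xi. rewrite Derive_PSeries.
  - rewrite PSeries_0. unfold PS_derive. simpl. ring.
  - apply Hr. rewrite Rabs_R0. auto.
Qed.
End S.

Lemma ev01 (P : R * R -> Prop) :
  (forall b, 0 < b < 1 -> P (0, b)) ->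
  filter_prod (at_point 0) (at_left 1) P.
Proof.
  intros H. apply (Filter_prod _ _ _ (fun a => a = 0) (fun b => 0 < b < 1)).
  - reflexivity.
  - assert (Hp : 0 < 1/2) by lra. exists (mkposreal _ Hp). intros y Hy Hy1.
    change (Rabs (y - 1) < 1/2) in Hy. apply Rabs_def2 in Hy. lra.
  - intros x y -> Hy. auto.
Qed.

Lemma locally_interval (x lo hi : R) : lo < x < hi -> locally x (fun y => lo < y < hi).
Proof.
  intros H. assert (Hp : 0 < Rmin (x - lo) (hi - x)) by (apply Rmin_glb_lt; lra).
  exists (mkposreal _ Hp). intros y Hy.
  change (Rabs (y - x) < Rmin (x - lo) (hi - x)) in Hy. apply Rabs_def2 in Hy.
  pose proof (Rmin_l (x - lo) (hi - x)). pose proof (Rmin_r (x - lo) (hi - x)). simpl in *. lra.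
Qed.

Lemma int_derive (f : R -> R) (d : R) : 0 < d ->
  (forall x, -d < x < 1 + d -> continuous f x) ->
  forall x, -d < x < 1 + d -> is_derive (RInt f 0) x (f x).
Proof.
  intros Hd0 Hc x Hx.
  apply (is_derive_RInt f (RInt f 0) 0 x); [|auto].
  apply filter_imp with (2 := locally_interval x (-d) (1+d) Hx).
  intros y Hy. apply (RInt_correct f 0 y). apply ex_RInt_continuous.
  intros z Hz. apply Hc.
  pose proof (Rmin_l 0 y). pose proof (Rmin_r 0 y). pose proof (Rmax_l 0 y). pose proof (Rmax_r 0 y).
  assert (0 < d) by lra.
  destruct (Rle_dec 0 y).
  - rewrite Rmin_left, Rmax_right in Hz by lra. lra.
  - rewrite Rmin_right, Rmax_left in Hz by lra. lra.
Qed.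

Lemma lemmaA (f : R -> R) (d : R) : 0 < d ->
  (forall x, -d < x < 1 + d -> continuous f x) ->
  is_RInt_gen f (at_point 0) (at_left 1) (RInt f 0 1).
Proof.
  intros Hd Hc.
  assert (HD : forall x, -d < x < 1 + d -> is_derive (RInt f 0) x (f x)) by (apply int_derive; auto).
  assert (Hin : forall ab : R * R, fst ab = 0 /\ 0 < snd ab < 1 -> forall x,
     Rmin (fst ab) (snd ab) <= x <= Rmax (fst ab) (snd ab) -> -d < x < 1 + d).
  { intros [a b] [Ha Hb] x Hx. simpl in *. subst a. rewrite Rmin_left, Rmax_right in Hx by lra. lra. }
  assert (H := @is_RInt_gen_Derive (at_point 0) (at_left 1) _ _ (RInt f 0) (RInt f 0 0) (RInt f 0 1)).
  replace (RInt f 0 0) with 0 in H by (rewrite RInt_point; reflexivity).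
  rewrite Rminus_0_r in H.
  apply is_RInt_gen_ext with (f := Derive (RInt f 0)).
  { apply ev01. intros b Hb x Hx. simpl in Hx.
    rewrite Rmin_left, Rmax_right in Hx by lra.
    apply is_derive_unique. apply HD. lra. }
  apply H.
  - apply ev01. intros b Hb x Hx. simpl in Hx.
    rewrite Rmin_left, Rmax_right in Hx by lra. eexists. apply HD. lra.
  - apply ev01. intros b Hb x Hx. simpl in Hx.
    rewrite Rmin_left, Rmax_right in Hx by lra.
    apply continuous_ext_loc with (g := f).
    + apply filter_imp with (2 := locally_interval x (-d) (1+d) ltac:(lra)).
      intros y Hy. symmetry. apply is_derive_unique. apply HD. auto.
    + apply Hc. lra.
  - intros P HP.
    apply locally_singleton in HP. unfold filtermap, at_point. rewrite RInt_point. exact HP.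
  - apply (filterlim_filter_le_1 (F := locally 1)).
    + apply filter_le_within.
    + apply (@ex_derive_continuous R_AbsRing R_NormedModule (RInt f 0) 1). eexists. apply HD. lra.
Qed.

Lemma cont_plus (f g : R -> R) x : continuous f x -> continuous g x -> continuous (fun y => f y + g y) x.
Proof. apply (@continuous_plus R_UniformSpace R_AbsRing R_NormedModule f g x). Qed.
Lemma cont_mult (f g : R -> R) x : continuous f x -> continuous g x -> continuous (fun y => f y * g y) x.
Proof. apply (@continuous_mult R_UniformSpace R_AbsRing f g x). Qed.
Lemma cont_opp (f : R -> R) x : continuous f x -> continuous (fun y => - f y) x.
Proof. apply (@continuous_opp R_UniformSpace R_AbsRing R_NormedModule f x). Qed.
Lemma cont_const (k : R) x : continuous (fun _ : R => k) x.
Proof. apply (@continuous_const R_UniformSpace R_UniformSpace). Qed.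
Lemma cont_id x : continuous (fun y : R => y) x.
Proof. apply (@continuous_id R_UniformSpace). Qed.
Lemma cont_inv (f : R -> R) x : continuous f x -> f x <> 0 -> continuous (fun y => / f y) x.
Proof. apply continuous_Rinv_comp. Qed.
Lemma cont_max0 (f : R -> R) x : continuous f x -> continuous (fun y => Rmax 0 (f y)) x.
Proof. intros H.
  apply (continuous_ext (fun y => / 2 * (f y + Rabs (f y)))).
  - intros y. cut (/ 2 * (f y + Rabs (f y)) = Rmax 0 (f y)); [auto|]. unfold Rmax. destruct (Rle_dec 0 (f y)).
    + rewrite Rabs_pos_eq by lra. field.
    + rewrite Rabs_left by lra. field.
  - apply cont_mult. apply cont_const. apply cont_plus; auto.
    apply (continuous_Rabs_comp f x H).
Qed.

Lemma pos_near (psi : R -> R) x : continuous psi x -> 0 < psi x ->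
  exists e, 0 < e /\ forall y, Rabs (y - x) < e -> 0 < psi y.
Proof.
  intros Hc Hp.
  assert (Hl : locally (psi x) (fun z => 0 < z < psi x + 1)) by (apply locally_interval; lra).
  specialize (Hc _ Hl). destruct Hc as [e He].
  exists e. split; [apply cond_pos|]. intros y Hy. apply He. exact Hy.
Qed.

Definition adm (psi : R -> R) : Prop :=
  in_C psi /\ (forall x, continuous psi x) /\ (forall x, 0 <= x <= 1 -> 0 < psi x).

Definition Pint (beta : nat -> R) (psi : R -> R) : R :=
  RInt (P0_integrand (xi beta) psi) 0 1.

Lemma P0_of_adm (beta : nat -> R) (r : R) (Hr1 : 1 < r)
  (Hr : forall x, Rabs x < r -> Rbar_lt (Rabs x) (CV_radius (model_coef beta)))
  (psi : R -> R) : adm psi -> P0_value (xi beta) psi (Pint beta psi).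
Proof.
  intros [HC [Hc Hp]]. split.
  - intros x Hx. apply Hp. lra.
  - destruct (pos_near psi 0 (Hc 0) ltac:(apply Hp; lra)) as [e0 [He0 H0]].
    destruct (pos_near psi 1 (Hc 1) ltac:(apply Hp; lra)) as [e1 [He1 H1]].
    set (d := Rmin (r - 1) (Rmin e0 e1)).
    assert (Hd1 : d <= r - 1) by apply Rmin_l.
    assert (Hd2 : d <= e0) by (eapply Rle_trans; [apply Rmin_r|apply Rmin_l]).
    assert (Hd3 : d <= e1) by (eapply Rle_trans; [apply Rmin_r|apply Rmin_r]).
    assert (Hd : 0 < d) by (apply Rmin_glb_lt; [lra|apply Rmin_glb_lt; lra]).
    apply (lemmaA _ d Hd). intros x Hx.
    assert (Hpx : 0 < psi x).
    { destruct (Rle_dec 0 x); [destruct (Rle_dec x 1)|].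
      - apply Hp; lra.
      - apply H1. rewrite Rabs_pos_eq; lra.
      - apply H0. rewrite Rabs_left; lra. }
    unfold P0_integrand. apply cont_plus.
    + apply cont_mult; [|apply Hc]. apply (xi_cont2 beta r Hr).
      apply Rabs_def1; lra.
    + apply cont_inv; [apply Hc|lra].
Qed.

Lemma min_facts (beta : nat -> R) (r : R) (Hr1 : 1 < r)
  (Hr : forall x, Rabs x < r -> Rbar_lt (Rabs x) (CV_radius (model_coef beta)))
  (phi phi0 : R -> R) :
  is_minimizer (xi beta) phi -> (forall t, 0 <= t <= 1 -> phi t = phi0 t) -> adm phi0 ->
  forall psi, adm psi -> Pint beta phi0 <= Pint beta psi.
Proof.
  intros [_ [v [[_ Hv] Hmin]]] Heq Hadm psi Hpsi.
  assert (Hv0 : v = Pint beta phi0).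
  { assert (H1 : is_RInt_gen (P0_integrand (xi beta) phi0) (at_point 0) (at_left 1) v).
    { apply is_RInt_gen_ext with (2 := Hv). apply ev01. intros b Hb x Hx. simpl in Hx.
      rewrite Rmin_left, Rmax_right in Hx by lra. unfold P0_integrand. rewrite Heq by lra. reflexivity. }
    destruct (P0_of_adm beta r Hr1 Hr phi0 Hadm) as [_ H2].
    pose proof (@is_RInt_gen_unique R_CompleteNormedModule (at_point 0) (at_left 1) _ _ _ _ H1) as E1.
    pose proof (@is_RInt_gen_unique R_CompleteNormedModule (at_point 0) (at_left 1) _ _ _ _ H2) as E2.
    rewrite <- E1. exact E2. }
  rewrite <- Hv0. apply (Hmin psi). apply Hpsi. apply (P0_of_adm beta r Hr1 Hr psi Hpsi).
Qed.

Definition fam (A B g a x : R) : R := A * (1 - x) + B - g * Rmax 0 (x - a).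

Lemma fam_cont A B g a x : continuous (fam A B g a) x.
Proof.
  unfold fam. apply (continuous_ext (fun y => (A * (1 - y) + B) + - (g * Rmax 0 (y - a)))).
  { intros y. cut ((A * (1 - y) + B) + - (g * Rmax 0 (y - a)) = A * (1 - y) + B - g * Rmax 0 (y - a)); [auto|]. ring. }
  apply cont_plus.
  - apply cont_plus; [|apply cont_const]. apply cont_mult; [apply cont_const|].
    apply (continuous_ext (fun y => 1 + - y)); [intros y; reflexivity|].
    apply cont_plus; [apply cont_const|apply cont_opp, cont_id].
  - apply cont_opp. apply cont_mult; [apply cont_const|]. apply cont_max0.
    apply (continuous_ext (fun y => y + - a)); [intros y; reflexivity|].
    apply cont_plus; [apply cont_id|apply cont_const].
Qed.

Lemma fam_adm (A B g a : R) (psi : R -> R) :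
  0 <= A -> 0 <= g -> 0 <= a <= 1 -> g * (1 - a) < B ->
  (forall x, psi x = fam A B g a x) -> adm psi.
Proof.
  intros HA Hg Ha HB Hpsi.
  assert (Hc : forall x, continuous psi x).
  { intros x. apply (continuous_ext (fam A B g a)); [intros y; auto|apply fam_cont]. }
  assert (Hpos : forall x, 0 <= x <= 1 -> 0 < psi x).
  { intros x Hx. rewrite Hpsi. unfold fam.
    assert (Rmax 0 (x - a) <= 1 - a) by (apply Rmax_lub; lra).
    assert (g * Rmax 0 (x - a) <= g * (1 - a)) by (apply Rmult_le_compat_l; lra).
    nra. }
  split; [|split; auto].
  split; [|split; [|split]].
  - intros x _. apply (filterlim_filter_le_1 (F := locally x)).
    + apply filter_le_within.
    + apply Hc.
  - intros x Hx. left. auto.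
  - intros x y Hx Hy Hxy. rewrite !Hpsi. unfold fam.
    assert (Rmax 0 (x - a) <= Rmax 0 (y - a)).
    { apply Rmax_lub. apply Rmax_l. eapply Rle_trans; [|apply Rmax_r]. lra. }
    assert (g * Rmax 0 (x - a) <= g * Rmax 0 (y - a)) by (apply Rmult_le_compat_l; lra).
    nra.
  - intros x y l Hx Hy Hl. rewrite !Hpsi. unfold fam.
    pose proof (Rmax_l 0 (x - a)). pose proof (Rmax_r 0 (x - a)).
    pose proof (Rmax_l 0 (y - a)). pose proof (Rmax_r 0 (y - a)).
    assert (Rmax 0 (l * x + (1 - l) * y - a) <= l * Rmax 0 (x - a) + (1 - l) * Rmax 0 (y - a)).
    { apply Rmax_lub; nra. }
    assert (g * Rmax 0 (l * x + (1 - l) * y - a) <= g * (l * Rmax 0 (x - a) + (1 - l) * Rmax 0 (y - a)))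
      by (apply Rmult_le_compat_l; lra).
    nra.
Qed.

Lemma RInt_plusR (f g : R -> R) a b : ex_RInt f a b -> ex_RInt g a b ->
  RInt (fun x => f x + g x) a b = RInt f a b + RInt g a b.
Proof. intros. apply (RInt_plus f g); auto. Qed.
Lemma RInt_minusR (f g : R -> R) a b : ex_RInt f a b -> ex_RInt g a b ->
  RInt (fun x => f x - g x) a b = RInt f a b - RInt g a b.
Proof. intros. apply (RInt_minus f g); auto. Qed.
Lemma RInt_scalR (f : R -> R) k a b : ex_RInt f a b ->
  RInt (fun x => k * f x) a b = k * RInt f a b.
Proof. intros. apply (RInt_scal f); auto. Qed.
Lemma RInt_constR (k : R) : RInt (fun _ => k) 0 1 = k.
Proof. rewrite RInt_const. cut ((1 - 0) * k = k); [auto|]. ring. Qed.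
Lemma exR (f : R -> R) : (forall x, 0 <= x <= 1 -> continuous f x) -> ex_RInt f 0 1.
Proof. intros H. apply (@ex_RInt_continuous R_CompleteNormedModule). intros z Hz.
  rewrite Rmin_left, Rmax_right in Hz by lra. auto. Qed.

Lemma foc (beta : nat -> R) (r : R) (Hr1 : 1 < r)
  (Hr : forall x, Rabs x < r -> Rbar_lt (Rabs x) (CV_radius (model_coef beta)))
  (m c : R) (Hm : 0 < m) (Hc : 0 < c)
  (Hmin : forall psi, adm psi -> Pint beta (fun x => m * (1 - x) + c) <= Pint beta psi)
  (h : R -> R) (Hh : forall x, continuous h x) (H : R)
  (HH : forall x, 0 <= x <= 1 -> Rabs (h x) <= H)
  (e0 : R) (He0 : 0 < e0)
  (Hadm : forall e, 0 < e < e0 -> adm (fun x => m * (1 - x) + c + e * h x)) :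
  0 <= RInt (fun x => (Derive_n (xi beta) 2 x - / (m * (1 - x) + c) ^ 2) * h x) 0 1.
Proof.
  set (d2 := Derive_n (xi beta) 2).
  set (I := RInt (fun x => (d2 x - / (m * (1 - x) + c) ^ 2) * h x) 0 1).
  assert (HH0 : 0 <= H).
  { eapply Rle_trans; [apply Rabs_pos|apply (HH 0)]. lra. }
  set (K := 2 * H ^ 2 / c ^ 3).
  assert (HK : 0 <= K) by (unfold K; apply Rmult_le_pos; [apply Rmult_le_pos; [lra|apply pow2_ge_0]|]; apply Rlt_le, Rinv_0_lt_compat, pow_lt; lra).
  set (e1 := Rmin e0 (c / (2 * (H + 1)))).
  assert (He1 : 0 < e1) by (apply Rmin_glb_lt; [lra|]; apply Rdiv_lt_0_compat; lra).
  assert (He1a : e1 <= e0) by apply Rmin_l.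
  assert (He1b : e1 <= c / (2 * (H + 1))) by apply Rmin_r.
  assert (Hd2 : forall x, 0 <= x <= 1 -> continuous d2 x).
  { intros x Hx. apply (xi_cont2 beta r Hr). apply Rabs_def1; lra. }
  assert (Hphi0 : forall x, 0 <= x <= 1 -> c <= m * (1 - x) + c) by (intros; nra).
  assert (Hcphi0 : forall x, continuous (fun x => m * (1 - x) + c) x).
  { intros x. apply (continuous_ext (fam m c 0 0)); [|apply fam_cont].
    intros y. unfold fam. cut (m * (1 - y) + c - 0 * Rmax 0 (y - 0) = m * (1 - y) + c); [auto|]. ring. }
  assert (Hkey : forall e, 0 < e < e1 -> - (e * K) <= I).
  { intros e He.
    set (psi := fun x => m * (1 - x) + c + e * h x).
    assert (Hpsi : forall x, 0 <= x <= 1 -> c / 2 <= psi x).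
    { intros x Hx. unfold psi. specialize (HH x Hx). apply Rabs_le_between in HH.
      assert (e * (H + 1) <= c / 2).
      { assert (e * (2 * (H + 1)) <= c).
        { apply Rle_trans with (c / (2 * (H + 1)) * (2 * (H + 1))).
          - apply Rmult_le_compat_r; lra.
          - right. field. lra. }
        lra. }
      specialize (Hphi0 x Hx). nra. }
    assert (Hcpsi : forall x, continuous psi x).
    { intros x. unfold psi. apply cont_plus; [apply Hcphi0|]. apply cont_mult; [apply cont_const|apply Hh]. }
    set (q := fun x => h x ^ 2 / ((m * (1 - x) + c) ^ 2 * psi x)).
    assert (Hdiff : Pint beta psi - Pint beta (fun x => m * (1 - x) + c) = e * I + e ^ 2 * RInt q 0 1).
    { unfold Pint. rewrite <- RInt_minusR.
      2:{ apply exR. intros x Hx. unfold P0_integrand. apply cont_plus.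
          apply cont_mult; [apply Hd2; auto|apply Hcpsi].
          apply cont_inv; [apply Hcpsi|]. specialize (Hpsi x Hx). lra. }
      2:{ apply exR. intros x Hx. unfold P0_integrand. apply cont_plus.
          apply cont_mult; [apply Hd2; auto|apply Hcphi0].
          apply cont_inv; [apply Hcphi0|]. specialize (Hphi0 x Hx). lra. }
      assert (ExI : ex_RInt (fun x => (d2 x - / (m * (1 - x) + c) ^ 2) * h x) 0 1).
      { apply exR. intros x Hx. apply cont_mult; [|apply Hh]. apply cont_plus; [apply Hd2; auto|].
        apply cont_opp. apply cont_inv.
        - apply (continuous_ext (fun y => (m * (1 - y) + c) * ((m * (1 - y) + c) * 1))); [intros; reflexivity|].
          apply cont_mult; [apply Hcphi0|]. apply cont_mult; [apply Hcphi0|apply cont_const].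
        - specialize (Hphi0 x Hx). apply pow_nonzero. lra. }
      assert (Exq : ex_RInt q 0 1).
      { apply exR. intros x Hx. unfold q. apply cont_mult.
        - apply (continuous_ext (fun y => h y * (h y * 1))); [intros; reflexivity|].
          apply cont_mult; [apply Hh|]. apply cont_mult; [apply Hh|apply cont_const].
        - apply cont_inv.
          + apply cont_mult; [|apply Hcpsi].
            apply (continuous_ext (fun y => (m * (1 - y) + c) * ((m * (1 - y) + c) * 1))); [intros; reflexivity|].
            apply cont_mult; [apply Hcphi0|]. apply cont_mult; [apply Hcphi0|apply cont_const].
          + specialize (Hphi0 x Hx). specialize (Hpsi x Hx).
            apply Rmult_integral_contrapositive. split; [apply pow_nonzero|]; lra. }
      unfold I. rewrite <- (RInt_scalR _ e) by exact ExI.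
      rewrite <- (RInt_scalR _ (e ^ 2)) by exact Exq.
      rewrite <- RInt_plusR.
      2:{ apply ex_RInt_scal with (k := e) in ExI. exact ExI. }
      2:{ apply ex_RInt_scal with (k := e ^ 2) in Exq. exact Exq. }
      apply RInt_ext. intros x Hx. rewrite Rmin_left, Rmax_right in Hx by lra.
      assert (Hx' : 0 <= x <= 1) by lra.
      specialize (Hphi0 x Hx'). specialize (Hpsi x Hx').
      unfold P0_integrand, q. fold d2. unfold psi in *.
      match goal with |- ?u = ?v => change (@eq R u v) end.
      field. split; lra. }
    assert (Hq : RInt q 0 1 <= K).
    { rewrite <- (RInt_constR K). apply RInt_le; [lra| | |].
      - apply exR. intros x Hx. unfold q. apply cont_mult.
        + apply (continuous_ext (fun y => h y * (h y * 1))); [intros; reflexivity|].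
          apply cont_mult; [apply Hh|]. apply cont_mult; [apply Hh|apply cont_const].
        + apply cont_inv.
          * apply cont_mult; [|apply Hcpsi].
            apply (continuous_ext (fun y => (m * (1 - y) + c) * ((m * (1 - y) + c) * 1))); [intros; reflexivity|].
            apply cont_mult; [apply Hcphi0|]. apply cont_mult; [apply Hcphi0|apply cont_const].
          * specialize (Hphi0 x Hx). specialize (Hpsi x Hx).
            apply Rmult_integral_contrapositive. split; [apply pow_nonzero|]; lra.
      - apply exR. intros. apply cont_const.
      - intros x Hx. assert (Hx' : 0 <= x <= 1) by lra.
        specialize (Hphi0 x Hx'). specialize (Hpsi x Hx'). specialize (HH x Hx').
        unfold q, K.
        assert (Hh2 : h x ^ 2 <= H ^ 2).
        { rewrite <- (pow2_abs (h x)). apply pow_incr. split; [apply Rabs_pos|exact HH]. }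
        assert (Hden : c ^ 2 * (c / 2) <= (m * (1 - x) + c) ^ 2 * psi x).
        { apply Rmult_le_compat; try nra; apply pow_incr; lra. }
        apply Rle_trans with (H ^ 2 * / (c ^ 2 * (c / 2))).
        + unfold Rdiv. apply Rmult_le_compat.
          * apply pow2_ge_0.
          * apply Rlt_le, Rinv_0_lt_compat. apply Rmult_lt_0_compat; [apply pow_lt|]; lra.
          * exact Hh2.
          * apply Rinv_le_contravar; [apply Rmult_lt_0_compat; [apply pow_lt|]; lra|exact Hden].
        + right. field. lra. }
    assert (Hge : Pint beta (fun x => m * (1 - x) + c) <= Pint beta psi).
    { apply Hmin. apply Hadm. lra. }
    assert (HQ : 0 <= e * I + e ^ 2 * RInt q 0 1) by lra.
    assert (HQ2 : 0 <= e * (I + e * K)).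
    { assert (e ^ 2 * RInt q 0 1 <= e ^ 2 * K) by (apply Rmult_le_compat_l; [apply pow2_ge_0|exact Hq]).
      nra. }
    assert (0 <= I + e * K).
    { apply (Rmult_le_reg_l e); lra. }
    lra. }
  destruct (Rle_or_lt 0 I) as [HI|HI]; [exact HI|].
  exfalso.
  set (e := Rmin (e1 / 2) (- I / (2 * (K + 1)))).
  assert (Hea : e <= e1 / 2) by apply Rmin_l.
  assert (Heb : e <= - I / (2 * (K + 1))) by apply Rmin_r.
  assert (He : 0 < e) by (apply Rmin_glb_lt; [lra|apply Rdiv_lt_0_compat; lra]).
  specialize (Hkey e ltac:(lra)).
  assert (e * (2 * (K + 1)) <= - I).
  { apply Rle_trans with (- I / (2 * (K + 1)) * (2 * (K + 1))).
    - apply Rmult_le_compat_r; lra.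
    - right. field. lra. }
  nra.
Qed.

Lemma is_derive_val (f : R -> R) x l1 l2 : is_derive f x l1 -> l1 = l2 -> is_derive f x l2.
Proof. intros H E. subst. exact H. Qed.

Lemma eta_d2 (F : R -> R) (m c : R) (Hm : 0 < m) (Hc : 0 < c) (t : R) :
  -1 < t < 1 + c / m ->
  Derive_n (conj_eta F (fun t => m * (1 - t) + c)) 2 t = / (m * (1 - t) + c) ^ 2.
Proof.
  intros Ht.
  set (L := 1 + c / m).
  assert (HL : 1 < L) by (unfold L; assert (0 < c / m) by (apply Rdiv_lt_0_compat; lra); lra).
  set (g := fun tau => / (m * (1 - tau) + c) ^ 2).
  assert (Hpos : forall x, x < L -> 0 < m * (1 - x) + c).
  { intros x Hx. unfold L in Hx. assert (m * x < m + c).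
    { apply Rlt_le_trans with (m * (1 + c / m)). apply Rmult_lt_compat_l; lra. right. field. lra. }
    lra. }
  assert (Hg : forall x, x < L -> continuous g x).
  { intros x Hx. unfold g. apply cont_inv.
    - apply (continuous_ext (fun y => (m * (1 - y) + c) * ((m * (1 - y) + c) * 1))); [intros; reflexivity|].
      assert (Hl : continuous (fun y => m * (1 - y) + c) x).
      { apply cont_plus; [|apply cont_const]. apply cont_mult; [apply cont_const|].
        apply (continuous_ext (fun y => 1 + - y)); [intros y; reflexivity|].
        apply cont_plus; [apply cont_const|apply cont_opp, cont_id]. }
      apply cont_mult; [exact Hl|]. apply cont_mult; [exact Hl|apply cont_const].
    - apply pow_nonzero. specialize (Hpos x Hx). lra. }
  set (G := RInt g 0).
  assert (HG : forall s, -1 < s < L -> is_derive G s (g s)).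
  { intros s Hs. apply (is_derive_RInt g G 0 s).
    - apply filter_imp with (2 := locally_interval s (-1) L Hs).
      intros y Hy. apply (RInt_correct g 0 y). apply (@ex_RInt_continuous R_CompleteNormedModule).
      intros z Hz. apply Hg.
      destruct (Rle_dec 0 y).
      + rewrite Rmin_left, Rmax_right in Hz by lra. lra.
      + rewrite Rmin_right, Rmax_left in Hz by lra. lra.
    - apply Hg. lra. }
  assert (HE : forall s, -1 < s < L -> is_derive (conj_eta F (fun t => m * (1 - t) + c)) s (G s)).
  { intros s Hs. unfold conj_eta. fold g. fold G.
    assert (H1 : is_derive (fun a0 => RInt G a0 1) s (opp (G s))).
    { apply (is_derive_RInt' G (fun a0 => RInt G a0 1) s 1).
      - apply filter_imp with (2 := locally_interval s (-1) L Hs).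
        intros y Hy. apply (RInt_correct G y 1). apply (@ex_RInt_continuous R_CompleteNormedModule).
        intros z Hz. apply (@ex_derive_continuous R_AbsRing R_NormedModule). eexists. apply HG.
        destruct (Rle_dec y 1).
        + rewrite Rmin_left, Rmax_right in Hz by lra. lra.
        + rewrite Rmin_right, Rmax_left in Hz by lra. lra.
      - apply (@ex_derive_continuous R_AbsRing R_NormedModule). eexists. apply HG. lra. }
    assert (H2 := is_derive_minus (fun _ : R => F 1) (fun a0 => RInt G a0 1) s _ _ (is_derive_const (F 1) s) H1).
    eapply is_derive_val; [eapply is_derive_ext; [|exact H2]; intros; reflexivity|].
    unfold minus, plus, opp, zero; simpl. cut (0 + - - G s = G s); [auto|]. ring. }
  change (Derive_n (conj_eta F (fun t => m * (1 - t) + c)) 2 t) with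
    (Derive (Derive (conj_eta F (fun t => m * (1 - t) + c))) t).
  rewrite (Derive_ext_loc _ G).
  - apply is_derive_unique. apply HG. exact Ht.
  - apply filter_imp with (2 := locally_interval t (-1) L Ht).
    intros y Hy. apply is_derive_unique. apply HE. exact Hy.
Qed.



Lemma int_d2 (beta : nat -> R) (r : R) (Hr1 : 1 < r)
  (Hr : forall x, Rabs x < r -> Rbar_lt (Rabs x) (CV_radius (model_coef beta))) :
  RInt (Derive_n (xi beta) 2) 0 1 = Derive (xi beta) 1.
Proof.
  assert (Hin : forall x, Rmin 0 1 <= x <= Rmax 0 1 -> Rabs x < r).
  { intros x Hx. rewrite Rmin_left, Rmax_right in Hx by lra. apply Rabs_def1; lra. }
  assert (H := is_RInt_derive (V := R_CompleteNormedModule) (Derive (xi beta)) (Derive_n (xi beta) 2) 0 1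
     (fun x Hx => xi_derive2 beta r Hr x (Hin x Hx)) (fun x Hx => xi_cont2 beta r Hr x (Hin x Hx))).
  apply is_RInt_unique in H. rewrite H.
  rewrite (xi'_0 beta r ltac:(lra) Hr).
  unfold minus, plus, opp; simpl. cut (Derive (xi beta) 1 + - 0 = Derive (xi beta) 1); [auto|]. ring.
Qed.

Lemma int_d2_lin (beta : nat -> R) (r : R) (Hr1 : 1 < r)
  (Hr : forall x, Rabs x < r -> Rbar_lt (Rabs x) (CV_radius (model_coef beta))) :
  RInt (fun x => Derive_n (xi beta) 2 x * (1 - x)) 0 1 = xi beta 1.
Proof.
  assert (Hin : forall x, Rmin 0 1 <= x <= Rmax 0 1 -> Rabs x < r).
  { intros x Hx. rewrite Rmin_left, Rmax_right in Hx by lra. apply Rabs_def1; lra. }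
  assert (H := is_RInt_derive (V := R_CompleteNormedModule)
     (fun x => Derive (xi beta) x * (1 - x) + xi beta x) (fun x => Derive_n (xi beta) 2 x * (1 - x)) 0 1).
  apply is_RInt_unique in H.
  - rewrite H. rewrite (xi'_0 beta r ltac:(lra) Hr), xi_0.
    unfold minus, plus, opp; simpl. cut (Derive (xi beta) 1 * (1 - 1) + xi beta 1 + - (0 * (1 - 0) + 0) = xi beta 1); [auto|]. ring.
  - intros x Hx. specialize (Hin x Hx).
    assert (Hl : is_derive (fun t : R => 1 - t) x (-1)).
    { auto_derive; auto; ring. }
    assert (H1 := is_derive_mult (K := R_AbsRing) _ _ x _ _ (xi_derive2 beta r Hr x Hin) Hl (fun a b => Rmult_comm a b)).
    assert (H2 := is_derive_plus _ _ x _ _ H1 (xi_derive beta r Hr x Hin)).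
    eapply is_derive_val; [eapply is_derive_ext; [|exact H2]; intros; reflexivity|].
    unfold plus, mult; simpl. ring.
  - intros x Hx. apply cont_mult. apply (xi_cont2 beta r Hr x (Hin x Hx)).
    apply (continuous_ext (fun y => 1 + - y)); [intros y; reflexivity|].
    apply cont_plus; [apply cont_const|apply cont_opp, cont_id].
Qed.

Lemma int_inv2 (m c : R) (Hm : 0 < m) (Hc : 0 < c) :
  RInt (fun x => / (m * (1 - x) + c) ^ 2) 0 1 = / (c * (c + m)).
Proof.
  assert (Hp : forall x, Rmin 0 1 <= x <= Rmax 0 1 -> 0 < m * (1 - x) + c).
  { intros x Hx. rewrite Rmin_left, Rmax_right in Hx by lra. nra. }
  assert (H := is_RInt_derive (V := R_CompleteNormedModule)
     (fun x => / (m * (m * (1 - x) + c))) (fun x => / (m * (1 - x) + c) ^ 2) 0 1).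
  apply is_RInt_unique in H.
  - rewrite H. unfold minus, plus, opp; simpl.
    cut (/ (m * (m * (1 - 1) + c)) + - / (m * (m * (1 - 0) + c)) = / (c * (c + m))); [auto|].
    field. repeat split; lra.
  - intros x Hx. specialize (Hp x Hx). auto_derive.
    + apply Rgt_not_eq. apply Rmult_lt_0_compat; lra.
    + field. lra.
  - intros x Hx. specialize (Hp x Hx). apply cont_inv.
    + apply (continuous_ext (fun y => (m * (1 - y) + c) * ((m * (1 - y) + c) * 1))); [intros; reflexivity|].
      assert (Hl : continuous (fun y => m * (1 - y) + c) x).
      { apply cont_plus; [|apply cont_const]. apply cont_mult; [apply cont_const|].
        apply (continuous_ext (fun y => 1 + - y)); [intros y; reflexivity|].
        apply cont_plus; [apply cont_const|apply cont_opp, cont_id]. }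
      apply cont_mult; [exact Hl|]. apply cont_mult; [exact Hl|apply cont_const].
    + apply pow_nonzero. lra.
Qed.

Lemma int_lin_inv2 (m c : R) (Hm : 0 < m) (Hc : 0 < c) :
  RInt (fun x => (1 - x) * / (m * (1 - x) + c) ^ 2) 0 1 = / m * (/ m * ln ((c + m) / c) - / (c + m)).
Proof.
  assert (Hp : forall x, Rmin 0 1 <= x <= Rmax 0 1 -> 0 < m * (1 - x) + c).
  { intros x Hx. rewrite Rmin_left, Rmax_right in Hx by lra. nra. }
  assert (H := is_RInt_derive (V := R_CompleteNormedModule)
     (fun x => - / m ^ 2 * ln (m * (1 - x) + c) - c / m ^ 2 * / (m * (1 - x) + c))
     (fun x => (1 - x) * / (m * (1 - x) + c) ^ 2) 0 1).
  apply is_RInt_unique in H.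
  - rewrite H. unfold minus, plus, opp; simpl.
    match goal with |- ?u = ?v => change (@eq R u v) end.
    replace (m * (1 - 1) + c) with c by ring. replace (m * (1 - 0) + c) with (c + m) by ring.
    rewrite ln_div by lra. field. repeat split; lra.
  - intros x Hx. specialize (Hp x Hx). auto_derive.
    + repeat split; lra.
    + field. lra.
  - intros x Hx. specialize (Hp x Hx).
    assert (Hl : continuous (fun y => m * (1 - y) + c) x).
    { apply cont_plus; [|apply cont_const]. apply cont_mult; [apply cont_const|].
      apply (continuous_ext (fun y => 1 + - y)); [intros y; reflexivity|].
      apply cont_plus; [apply cont_const|apply cont_opp, cont_id]. }
    apply cont_mult.
    + apply (continuous_ext (fun y => 1 + - y)); [intros y; reflexivity|].
      apply cont_plus; [apply cont_const|apply cont_opp, cont_id].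
    + apply cont_inv.
      * apply (continuous_ext (fun y => (m * (1 - y) + c) * ((m * (1 - y) + c) * 1))); [intros; reflexivity|].
        apply cont_mult; [exact Hl|]. apply cont_mult; [exact Hl|apply cont_const].
      * apply pow_nonzero. lra.
Qed.

Lemma cont_lin (p q : R) x : continuous (fun y => p * y + q) x.
Proof. apply cont_plus; [apply cont_mult; [apply cont_const|apply cont_id]|apply cont_const]. Qed.

Lemma int_hR (a : R) : 0 <= a <= 1 -> RInt (fun x => Rmax 0 (x - a)) 0 1 = (1 - a) ^ 2 / 2.
Proof.
  intros Ha.
  assert (Hc : forall x, continuous (fun x => Rmax 0 (x - a)) x).
  { intros x. apply cont_max0. apply (continuous_ext (fun y => 1 * y + - a)); [intros; cut (1 * x0 + - a = x0 - a); [auto|]; ring|]. apply cont_lin. }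
  rewrite <- (RInt_Chasles _ 0 a 1).
  2,3: apply (@ex_RInt_continuous R_CompleteNormedModule); intros; apply Hc.
  rewrite (RInt_ext _ (fun _ => 0) 0 a).
  2:{ intros x Hx. rewrite Rmin_left, Rmax_right in Hx by lra. rewrite Rmax_left by lra. reflexivity. }
  rewrite (RInt_ext _ (fun x => x - a) a 1).
  2:{ intros x Hx. rewrite Rmin_left, Rmax_right in Hx by lra. rewrite Rmax_right by lra. reflexivity. }
  rewrite RInt_const.
  assert (H := is_RInt_derive (V := R_CompleteNormedModule) (fun x => (x - a) ^ 2 / 2) (fun x => x - a) a 1).
  apply is_RInt_unique in H.
  - rewrite H. unfold minus, plus, opp, scal; simpl. unfold mult; simpl.
    match goal with |- ?u = ?v => change (@eq R u v) end. field.
  - intros x _. auto_derive; auto. field.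
  - intros x _. apply (continuous_ext (fun y => 1 * y + - a)); [intros; cut (1 * x0 + - a = x0 - a); [auto|]; ring|]. apply cont_lin.
Qed.

Lemma int_hL (a : R) : 0 <= a <= 1 -> RInt (fun x => Rmax 0 (a - x)) 0 1 = a ^ 2 / 2.
Proof.
  intros Ha.
  assert (Hc : forall x, continuous (fun x => Rmax 0 (a - x)) x).
  { intros x. apply cont_max0. apply (continuous_ext (fun y => (-1) * y + a)); [intros; cut (-1 * x0 + a = a - x0); [auto|]; ring|]. apply cont_lin. }
  rewrite <- (RInt_Chasles _ 0 a 1).
  2,3: apply (@ex_RInt_continuous R_CompleteNormedModule); intros; apply Hc.
  rewrite (RInt_ext _ (fun _ => 0) a 1).
  2:{ intros x Hx. rewrite Rmin_left, Rmax_right in Hx by lra. rewrite Rmax_left by lra. reflexivity. }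
  rewrite (RInt_ext _ (fun x => a - x) 0 a).
  2:{ intros x Hx. rewrite Rmin_left, Rmax_right in Hx by lra. rewrite Rmax_right by lra. reflexivity. }
  rewrite RInt_const.
  assert (H := is_RInt_derive (V := R_CompleteNormedModule) (fun x => - (a - x) ^ 2 / 2) (fun x => a - x) 0 a).
  apply is_RInt_unique in H.
  - rewrite H. unfold minus, plus, opp, scal; simpl. unfold mult; simpl.
    match goal with |- ?u = ?v => change (@eq R u v) end. field.
  - intros x _. auto_derive; auto. field.
  - intros x _. apply (continuous_ext (fun y => (-1) * y + a)); [intros; cut (-1 * x0 + a = a - x0); [auto|]; ring|]. apply cont_lin.
Qed.

Theorem corollary1p23 (beta : nat -> R) (phi : R -> R) (m c : R) :
  is_model beta ->
  0 < m -> 0 < c ->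
  is_minimizer (xi beta) phi ->
  (forall t, 0 <= t <= 1 -> phi t = m * (1 - t) + c) ->
  let eta := conj_eta (xi beta) (fun t => m * (1 - t) + c) in
  (xi beta 1 = / m * (/ m * ln ((c + m) / c) - / (c + m)) /\
   / Derive (xi beta) 1 = c * (c + m)) /\
  Derive_n eta 2 1 >= Derive_n (xi beta) 2 1 /\
  Derive_n eta 2 0 >= Derive_n (xi beta) 2 0.
Proof.
  intros Hmodel Hm Hc Hminz Hphi eta.
  destruct (radius_model beta Hmodel) as [r [Hr1 Hr]].
  assert (Hmin : forall psi, adm psi -> Pint beta (fun x => m * (1 - x) + c) <= Pint beta psi).
  { apply (min_facts beta r Hr1 Hr phi); auto.
    apply (fam_adm m c 0 0); try lra. intros x. unfold fam. ring. }
  set (d2 := Derive_n (xi beta) 2).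
  set (D := fun x => d2 x - / (m * (1 - x) + c) ^ 2).
  assert (Hphi0 : forall x, 0 <= x <= 1 -> c <= m * (1 - x) + c) by (intros; nra).
  assert (Hl : forall x, continuous (fun y => m * (1 - y) + c) x).
  { intros x. apply cont_plus; [|apply cont_const]. apply cont_mult; [apply cont_const|].
    apply (continuous_ext (fun y => 1 + - y)); [intros y; reflexivity|].
    apply cont_plus; [apply cont_const|apply cont_opp, cont_id]. }
  assert (HDc : forall x, 0 <= x <= 1 -> continuous D x).
  { intros x Hx. unfold D. apply cont_plus.
    - apply (xi_cont2 beta r Hr). apply Rabs_def1; lra.
    - apply cont_opp. apply cont_inv.
      + apply (continuous_ext (fun y => (m * (1 - y) + c) * ((m * (1 - y) + c) * 1))); [intros; reflexivity|].
        apply cont_mult; [apply Hl|]. apply cont_mult; [apply Hl|apply cont_const].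
      + apply pow_nonzero. specialize (Hphi0 x Hx). lra. }
  assert (exD : forall h : R -> R, (forall x, continuous h x) -> ex_RInt (fun x => D x * h x) 0 1).
  { intros h Hh. apply exR. intros x Hx. apply cont_mult; auto. }
  assert (Hfoc := foc beta r Hr1 Hr m c Hm Hc Hmin).
  fold d2 in Hfoc.
  assert (F1 : 0 <= RInt (fun x => D x * 1) 0 1).
  { apply (Hfoc (fun _ => 1) (fun x => cont_const 1 x) 1) with (e0 := c); auto.
    - intros. rewrite Rabs_R1. lra.
    - intros e He. apply (fam_adm m (c + e) 0 0); try lra. intros x. unfold fam. ring. }
  assert (F2 : 0 <= RInt (fun x => D x * (-1)) 0 1).
  { apply (Hfoc (fun _ => -1) (fun x => cont_const (-1) x) 1) with (e0 := c); auto.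
    - intros. cbv beta. unfold Rabs; destruct Rcase_abs; lra.
    - intros e He. apply (fam_adm m (c - e) 0 0); try lra. intros x. unfold fam. ring. }
  assert (Hlin : forall x, continuous (fun y => 1 - y) x).
  { intros x. apply (continuous_ext (fun y => 1 + - y)); [intros y; reflexivity|].
    apply cont_plus; [apply cont_const|apply cont_opp, cont_id]. }
  assert (F3 : 0 <= RInt (fun x => D x * (1 - x)) 0 1).
  { apply (Hfoc (fun x => 1 - x) Hlin 1) with (e0 := m); auto.
    - intros x Hx. cbv beta. rewrite Rabs_pos_eq; lra.
    - intros e He. apply (fam_adm (m + e) c 0 0); try lra. intros x. unfold fam. ring. }
  assert (F4 : 0 <= RInt (fun x => D x * - (1 - x)) 0 1).
  { apply (Hfoc (fun x => - (1 - x)) (fun x => cont_opp _ x (Hlin x)) 1) with (e0 := m); auto.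
    - intros x Hx. cbv beta. rewrite Rabs_Ropp, Rabs_pos_eq; lra.
    - intros e He. apply (fam_adm (m - e) c 0 0); try lra. intros x. unfold fam. ring. }
  assert (Hneg : forall h : R -> R, (forall x, continuous h x) ->
     RInt (fun x => D x * - h x) 0 1 = - RInt (fun x => D x * h x) 0 1).
  { intros h Hh. rewrite <- (Rmult_1_l (RInt (fun x => D x * h x) 0 1)).
    rewrite Ropp_mult_distr_l. rewrite <- RInt_scalR by (apply exD; auto).
    apply RInt_ext. intros x _. cut (D x * - h x = -1 * (D x * h x)); [auto|]. ring. }
  assert (E1 : RInt (fun x => D x * 1) 0 1 = 0).
  { rewrite (RInt_ext _ (fun x => D x * - ((fun _ => 1) x))) in F2.
    2:{ intros x _. cut (D x * -1 = D x * - 1); [auto|]. ring. }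
    rewrite (Hneg (fun _ => 1)) in F2 by (intros; apply cont_const). lra. }
  assert (E2 : RInt (fun x => D x * (1 - x)) 0 1 = 0).
  { rewrite (Hneg (fun x => 1 - x)) in F4 by auto. lra. }
  assert (Hinv2c : forall x, 0 <= x <= 1 -> continuous (fun y => / (m * (1 - y) + c) ^ 2) x).
  { intros x Hx. apply cont_inv.
    + apply (continuous_ext (fun y => (m * (1 - y) + c) * ((m * (1 - y) + c) * 1))); [intros; reflexivity|].
      apply cont_mult; [apply Hl|]. apply cont_mult; [apply Hl|apply cont_const].
    + apply pow_nonzero. specialize (Hphi0 x Hx). lra. }
  assert (Hd2c : forall x, 0 <= x <= 1 -> continuous d2 x).
  { intros x Hx. apply (xi_cont2 beta r Hr). apply Rabs_def1; lra. }
  assert (P1 : Derive (xi beta) 1 = / (c * (c + m))).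
  { rewrite (RInt_ext _ (fun x => d2 x - / (m * (1 - x) + c) ^ 2)) in E1.
    2:{ intros x _. unfold D. cut ((d2 x - / (m * (1 - x) + c) ^ 2) * 1 = d2 x - / (m * (1 - x) + c) ^ 2); [auto|]. ring. }
    rewrite RInt_minusR in E1 by (apply exR; auto).
    unfold d2 in E1. rewrite (int_d2 beta r Hr1 Hr), (int_inv2 m c Hm Hc) in E1. lra. }
  assert (P2 : xi beta 1 = / m * (/ m * ln ((c + m) / c) - / (c + m))).
  { rewrite (RInt_ext _ (fun x => d2 x * (1 - x) - (1 - x) * / (m * (1 - x) + c) ^ 2)) in E2.
    2:{ intros x _. unfold D. cut ((d2 x - / (m * (1 - x) + c) ^ 2) * (1 - x) = d2 x * (1 - x) - (1 - x) * / (m * (1 - x) + c) ^ 2); [auto|]. ring. }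
    rewrite RInt_minusR in E2.
    2:{ apply exR. intros. apply cont_mult; auto. }
    2:{ apply exR. intros. apply cont_mult; auto. }
    unfold d2 in E2. rewrite (int_d2_lin beta r Hr1 Hr), (int_lin_inv2 m c Hm Hc) in E2. lra. }
  split; [split; [exact P2|]|].
  { rewrite P1. rewrite Rinv_inv. ring. }
  assert (Hsh : forall a x, continuous (fun y => y - a) x).
  { intros a x. apply (continuous_ext (fun y => 1 * y + - a)); [intros; cut (1 * x0 + - a = x0 - a); [auto|]; ring|]. apply cont_lin. }
  assert (Hsh2 : forall a x, continuous (fun y => a - y) x).
  { intros a x. apply (continuous_ext (fun y => (-1) * y + a)); [intros; cut (-1 * x0 + a = a - x0); [auto|]; ring|]. apply cont_lin. }
  assert (T : forall a, 0 <= a <= 1 -> 0 <= RInt (fun x => D x * - Rmax 0 (x - a)) 0 1).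
  { intros a Ha.
    apply (Hfoc (fun x => - Rmax 0 (x - a)) (fun x => cont_opp _ x (cont_max0 _ x (Hsh a x))) 1) with (e0 := c); auto.
    - intros x Hx. cbv beta. rewrite Rabs_Ropp, Rabs_pos_eq by apply Rmax_l. apply Rmax_lub; lra.
    - intros e He. apply (fam_adm m c e a); try lra. nra. intros x. unfold fam. ring. }
  assert (U : forall a, 0 <= a <= 1 -> 0 <= RInt (fun x => D x * - Rmax 0 (a - x)) 0 1).
  { intros a Ha.
    apply (Hfoc (fun x => - Rmax 0 (a - x)) (fun x => cont_opp _ x (cont_max0 _ x (Hsh2 a x))) 1) with (e0 := m); auto.
    - intros x Hx. cbv beta. rewrite Rabs_Ropp, Rabs_pos_eq by apply Rmax_l. apply Rmax_lub; lra.
    - intros e He. apply (fam_adm (m - e) (c + e * (1 - a)) e a); try lra.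
      intros x. unfold fam. destruct (Rle_dec x a).
      + rewrite (Rmax_left 0 (x - a)) by lra. rewrite (Rmax_right 0 (a - x)) by lra. ring.
      + rewrite (Rmax_right 0 (x - a)) by lra. rewrite (Rmax_left 0 (a - x)) by lra. ring. }
  unfold eta. rewrite !(eta_d2 (xi beta) m c Hm Hc).
  2,3: split; [lra|]; assert (0 < c / m) by (apply Rdiv_lt_0_compat; lra); lra.
  replace (m * (1 - 1) + c) with c by ring. replace (m * (1 - 0) + c) with (m + c) by ring.
  split.
  - destruct (Rle_or_lt (d2 1) (/ c ^ 2)) as [H|H]; [lra|exfalso].
    assert (HD1 : D 1 = d2 1 - / c ^ 2) by (unfold D; f_equal; f_equal; f_equal; ring).
    assert (Hk : 0 < D 1) by lra.
    assert (Hcont : continuous (fun x => D x - D 1 / 2) 1).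
    { apply (continuous_ext (fun x => D x + - (D 1 / 2))); [intros; reflexivity|].
      apply cont_plus; [apply HDc; lra|apply cont_const]. }
    destruct (pos_near _ 1 Hcont ltac:(cbv beta; lra)) as [e [He Hnear]].
    set (a := Rmax (1 / 2) (1 - e / 2)).
    assert (Ha1 : 1 / 2 <= a) by apply Rmax_l.
    assert (Ha2 : 1 - e / 2 <= a) by apply Rmax_r.
    assert (Ha3 : a < 1) by (apply Rmax_lub_lt; lra).
    specialize (T a ltac:(lra)).
    assert (Hle : RInt (fun x => D x * - Rmax 0 (x - a)) 0 1 <= RInt (fun x => - (D 1 / 2) * Rmax 0 (x - a)) 0 1).
    { apply RInt_le; [lra| | |].
      - apply exD. intros x. apply cont_opp, cont_max0, Hsh.
      - apply exR. intros x _. apply cont_mult; [apply cont_const|apply cont_max0, Hsh].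
      - intros x Hx. destruct (Rle_dec x a).
        + rewrite Rmax_left by lra. lra.
        + rewrite Rmax_right by lra.
          assert (0 < D x - D 1 / 2) by (apply Hnear; rewrite Rabs_left by lra; lra).
          nra. }
    rewrite RInt_scalR in Hle.
    2:{ apply exR. intros x _. apply cont_max0, Hsh. }
    rewrite int_hR in Hle by lra.
    assert (0 < (1 - a) ^ 2) by (apply pow_lt; lra).
    nra.
  - destruct (Rle_or_lt (d2 0) (/ (m + c) ^ 2)) as [H|H]; [lra|exfalso].
    assert (HD1 : D 0 = d2 0 - / (m + c) ^ 2) by (unfold D; f_equal; f_equal; f_equal; ring).
    assert (Hk : 0 < D 0) by lra.
    assert (Hcont : continuous (fun x => D x - D 0 / 2) 0).
    { apply (continuous_ext (fun x => D x + - (D 0 / 2))); [intros; reflexivity|].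
      apply cont_plus; [apply HDc; lra|apply cont_const]. }
    destruct (pos_near _ 0 Hcont ltac:(cbv beta; lra)) as [e [He Hnear]].
    set (a := Rmin (1 / 2) (e / 2)).
    assert (Ha1 : a <= 1 / 2) by apply Rmin_l.
    assert (Ha2 : a <= e / 2) by apply Rmin_r.
    assert (Ha3 : 0 < a) by (apply Rmin_glb_lt; lra).
    specialize (U a ltac:(lra)).
    assert (Hle : RInt (fun x => D x * - Rmax 0 (a - x)) 0 1 <= RInt (fun x => - (D 0 / 2) * Rmax 0 (a - x)) 0 1).
    { apply RInt_le; [lra| | |].
      - apply exD. intros x. apply cont_opp, cont_max0, Hsh2.
      - apply exR. intros x _. apply cont_mult; [apply cont_const|apply cont_max0, Hsh2].
      - intros x Hx. destruct (Rle_dec a x).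
        + rewrite Rmax_left by lra. lra.
        + rewrite Rmax_right by lra.
          assert (0 < D x - D 0 / 2) by (apply Hnear; rewrite Rabs_pos_eq by lra; lra).
          nra. }
    rewrite RInt_scalR in Hle.
    2:{ apply exR. intros x _. apply cont_max0, Hsh2. }
    rewrite int_hL in Hle by lra.
    assert (0 < a ^ 2) by (apply pow_lt; lra).
    nra.
Qed.
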